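(* Let $1<a<b$ be coprime integers and $D\subseteq G$ a subdiagram. Then there are bijections $N_b\to D_b$ and $N_r\to D_r$ (so $|N_b|=|D_b|$ and $|N_r|=|D_r|$). Moreover, if $D\neq\varnothing$ and $d$ is the cell of $D$ with the smallest value $g(d)$, then $d\notin D_b\cup D_r$.
   Context: Fix coprime integers $1<a<b$. Work in the grid $\mathbb{Z}^2$ ($+x$ east, $+y$ north). Let $g:\mathbb{Z}^2\to\mathbb{Z}$, $g(x,y)=ab-ax-by$; for a cell $c=(x,y)$ and integer $k$, $c-ka:=(x+k,y)$ and $c-kb:=(x,y+k)$. Let $G=\{(x,y)\in\mathbb{Z}_{\ge1}^2: g(x,y)>0\}$ ($g$ is injective on $G$). A subdiagram is a subset $D\subseteq G$ such that whenever $(x,y)\in D$, $(x',y')\in G$, $x'\le x$, $y'\le y$, we have $(x',y')\in D$. For cells $i,j$, write $i\to j$ iff $0\le g(j)-g(i)<a$. Let $U_D=\{(x,y)\in\mathbb{Z}^2: (x,y)\notin D,\ (x,y-1)\in D\cup(\mathbb{Z}_{\ge1}\times\mathbb{Z}_{\le0})\}$, and $N=\{(i,j)\in D\times U_D: i\to j\}$. Let $N_b$ be the set of $(i,j)\in N$ with $j$ strictly north of $i$ (larger $y$-coordinate), and $N_r$ the set of $(i,j)\in N$ with $j$ strictly south of $i$ (these two sets partition $N$). For $c\in D$ let $\mathrm{arm}_D(c)=\max\{k\ge0: c-ka\in D\}$, $\mathrm{leg}_D(c)=\max\{k\ge0: c-kb\in D\}$, $m(c)=\frac{\mathrm{leg}_D(c)}{\mathrm{arm}_D(c)+1}$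 and $M(c)=\frac{\mathrm{leg}_D(c)+1}{\mathrm{arm}_D(c)}$ (with $M(c)=+\infty$ if $\mathrm{arm}_D(c)=0$). Define $D_b=\{c\in D: M(c)\le a/b\}$ and $D_r=\{c\in D: m(c)\ge a/b\}$. *)

(* Defs.v *)
From Stdlib Require Import ZArith QArith.
Open Scope Z_scope.

Definition cell := (Z * Z)%type.

Definition g (a b : Z) (c : cell) : Z := a * b - a * fst c - b * snd c.

(* c - k a := (x+k, y) ;  c - k b := (x, y+k) *)
Definition sub_a (c : cell) (k : Z) : cell := (fst c + k, snd c).
Definition sub_b (c : cell) (k : Z) : cell := (fst c, snd c + k).

Definition inG (a b : Z) (c : cell) : Prop :=
  1 <= fst c /\ 1 <= snd c /\ 0 < g a b c.

Definition subdiagram (a b : Z) (D : cell -> Prop) : Prop :=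
  (forall c, D c -> inG a b c) /\
  (forall x y x' y', D (x, y) -> inG a b (x', y') -> x' <= x -> y' <= y ->
     D (x', y')).

Definition arrow (a b : Z) (i j : cell) : Prop :=
  0 <= g a b j - g a b i < a.

Definition low (c : cell) : Prop := 1 <= fst c /\ snd c <= 0.

Definition U (D : cell -> Prop) (c : cell) : Prop :=
  ~ (D c \/ low c) /\
  (D (fst c, snd c - 1) \/ low (fst c, snd c - 1)).

Definition Nset (a b : Z) (D : cell -> Prop) (p : cell * cell) : Prop :=
  D (fst p) /\ U D (snd p) /\ arrow a b (fst p) (snd p).

Definition Nb (a b : Z) (D : cell -> Prop) (p : cell * cell) : Prop :=
  Nset a b D p /\ snd (fst p) < snd (snd p).

Definition Nr (a b : Z) (D : cell -> Prop) (p : cell * cell) : Prop :=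
  Nset a b D p /\ snd (snd p) < snd (fst p).

Definition is_arm (D : cell -> Prop) (c : cell) (k : Z) : Prop :=
  0 <= k /\ D (sub_a c k) /\ (forall k', 0 <= k' -> D (sub_a c k') -> k' <= k).

Definition is_leg (D : cell -> Prop) (c : cell) (l : Z) : Prop :=
  0 <= l /\ D (sub_b c l) /\ (forall l', 0 <= l' -> D (sub_b c l') -> l' <= l).

(* M(c) <= a/b, where M(c) = (leg+1)/arm, and M(c) = +oo when arm = 0 *)
Definition M_le (a b arm leg : Z) : Prop :=
  arm <> 0 /\ (inject_Z (leg + 1) / inject_Z arm <= inject_Z a / inject_Z b)%Q.

Definition m_ge (a b arm leg : Z) : Prop :=
  (inject_Z a / inject_Z b <= inject_Z leg / inject_Z (arm + 1))%Q.

Definition Db (a b : Z) (D : cell -> Prop) (c : cell) : Prop :=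
  D c /\ exists k l, is_arm D c k /\ is_leg D c l /\ M_le a b k l.

Definition Dr (a b : Z) (D : cell -> Prop) (c : cell) : Prop :=
  D c /\ exists k l, is_arm D c k /\ is_leg D c l /\ m_ge a b k l.

Definition Bijection {A B : Type} (f : A -> B) : Prop :=
  exists h : B -> A, (forall x, h (f x) = x) /\ (forall y, f (h y) = y).

(* Main.v *)
Require Import Defs.
From Stdlib Require Import ZArith QArith Lia ClassicalEpsilon ProofIrrelevance Classical.
Open Scope Z_scope.

Lemma Qdiv_le_iff (p q r s : Z) : 0 < q -> 0 < s ->
  (inject_Z p / inject_Z q <= inject_Z r / inject_Z s)%Q <-> p * s <= r * q.
Proof.
  intros Hq Hs. destruct q as [|qp|qp]; try lia. destruct s as [|sp|sp]; try lia.
  unfold Qle, Qdiv, Qmult, Qinv, inject_Z; simpl. lia.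
Qed.

Definition ctx (a b : Z) (D : cell -> Prop) := 1 < a /\ a < b /\ subdiagram a b D.

Lemma L_inG a b D (H : ctx a b D) x y : D (x,y) -> 1 <= x /\ 1 <= y /\ 0 < a*b - a*x - b*y.
Proof. intros Hd. destruct H as [_ [_ [H1 _]]]. apply H1 in Hd. unfold inG, g in Hd; simpl in Hd. exact Hd. Qed.

Lemma L_close a b D (H : ctx a b D) x y x' y' : D (x,y) -> 1 <= x' -> 1 <= y' -> x' <= x -> y' <= y -> D (x',y').
Proof.
  intros Hd h1 h2 h3 h4. pose proof (L_inG a b D H x y Hd) as [_ [_ Hg]].
  destruct H as [Ha [Hab [_ H2]]]. apply (H2 x y); auto.
  unfold inG, g; simpl. split; [lia|split;[lia|]].
  assert (a*x' <= a*x) by (apply Z.mul_le_mono_nonneg_l; lia).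
  assert (b*y' <= b*y) by (apply Z.mul_le_mono_nonneg_l; lia). lia.
Qed.

Lemma L_ybound a b D (H : ctx a b D) x y : D (x,y) -> y < a.
Proof. intros Hd. pose proof (L_inG a b D H x y Hd). destruct H as [Ha [Hab _]]. nia. Qed.

Lemma L_xbound a b D (H : ctx a b D) x y : D (x,y) -> x < b.
Proof. intros Hd. pose proof (L_inG a b D H x y Hd). destruct H as [Ha [Hab _]]. nia. Qed.

Lemma exists_max (P : Z -> Prop) B n0 : P n0 -> (forall n, P n -> n <= B) ->
  exists m, P m /\ forall n, P n -> n <= m.
Proof.
  intros H0 HB.
  assert (forall d : nat, forall n, P n -> B - n <= Z.of_nat d -> exists m, P m /\ forall n, P n -> n <= m).
  { induction d as [|d IH]; intros n Pn Hn.
    - exists n. split; auto. intros n' Pn'. specialize (HB n' Pn'). lia.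
    - destruct (classic (exists n', P n' /\ n < n')) as [[n' [Pn' Hlt]]|Hno].
      + apply (IH n'); auto. lia.
      + exists n. split; auto. intros n' Pn'. destruct (Z_le_gt_dec n' n); auto.
        exfalso; apply Hno; exists n'; split; auto; lia. }
  apply (H (Z.to_nat (B - n0)) n0 H0). lia.
Qed.

Lemma arm_ex a b D (H : ctx a b D) c : D c -> exists k, is_arm D c k.
Proof.
  destruct c as [x y]. intros Hd.
  destruct (exists_max (fun k => 0 <= k /\ D (sub_a (x,y) k)) b 0) as [m [[Hm1 Hm2] Hm3]].
  - unfold sub_a; simpl. rewrite Z.add_0_r. split; [lia|auto].
  - intros n [Hn1 Hn2]. unfold sub_a in Hn2; simpl in Hn2.
    pose proof (L_xbound a b D H _ _ Hn2). pose proof (L_inG a b D H _ _ Hd). lia.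
  - exists m. unfold is_arm. split; auto.
Qed.

Lemma leg_ex a b D (H : ctx a b D) c : D c -> exists l, is_leg D c l.
Proof.
  destruct c as [x y]. intros Hd.
  destruct (exists_max (fun k => 0 <= k /\ D (sub_b (x,y) k)) a 0) as [m [[Hm1 Hm2] Hm3]].
  - unfold sub_b; simpl. rewrite Z.add_0_r. split; [lia|auto].
  - intros n [Hn1 Hn2]. unfold sub_b in Hn2; simpl in Hn2.
    pose proof (L_ybound a b D H _ _ Hn2). pose proof (L_inG a b D H _ _ Hd). lia.
  - exists m. unfold is_leg. split; auto.
Qed.

Definition colmax (D : cell -> Prop) (x h : Z) : Prop :=
  0 <= h /\ (h = 0 \/ D (x,h)) /\ (forall y, D (x,y) -> y <= h).

Lemma col_ex a b D (H : ctx a b D) x : exists h, colmax D x h.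
Proof.
  destruct (exists_max (fun h => 0 <= h /\ (h = 0 \/ D (x,h))) a 0) as [m [[Hm1 Hm2] Hm3]].
  - split; auto; lia.
  - intros n [Hn1 [->|Hn2]]. destruct H; lia. apply (L_ybound a b D H x n) in Hn2. lia.
  - exists m. split; auto. split; auto. intros y Hy. apply Hm3. split; auto.
    apply (L_inG a b D H) in Hy. lia.
Qed.

Lemma leg_uniq D c l1 l2 : is_leg D c l1 -> is_leg D c l2 -> l1 = l2.
Proof. intros [h1 [h2 h3]] [k1 [k2 k3]]. specialize (h3 l2 k1 k2). specialize (k3 l1 h1 h2). lia. Qed.

Lemma col_uniq D x h1 h2 : colmax D x h1 -> colmax D x h2 -> h1 = h2.
Proof.
  intros [a1 [[->|a2] a3]] [b1 [[->|b2] b3]]; auto.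
  - apply a3 in b2. lia.
  - apply b3 in a2. lia.
  - apply a3 in b2. apply b3 in a2. lia.
Qed.

Definition legf (D : cell -> Prop) (c : cell) : Z := epsilon (inhabits 0) (is_leg D c).
Definition colf (D : cell -> Prop) (x : Z) : Z := epsilon (inhabits 0) (colmax D x).

Lemma legf_eq D c l : is_leg D c l -> legf D c = l.
Proof. intros Hl. apply (leg_uniq D c); auto. unfold legf. apply epsilon_spec. eauto. Qed.

Lemma colf_eq D x h : colmax D x h -> colf D x = h.
Proof. intros Hl. apply (col_uniq D x); auto. unfold colf. apply epsilon_spec. eauto. Qed.

Lemma U_unpack a b D (H : ctx a b D) x y : U D (x,y) ->
  1 <= x /\ 1 <= y /\ ~ D (x,y) /\ (y = 1 \/ D (x, y-1)).
Proof.
  unfold U, low; simpl. intros [Hn [Hd|Hl]].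
  - pose proof (L_inG a b D H _ _ Hd). repeat split; try lia; auto.
  - destruct (Z_le_gt_dec y 0). exfalso; apply Hn; right; lia.
    split; [lia|split;[lia|split]]. intros Hd; apply Hn; auto. left; lia.
Qed.

Lemma U_pack D x y : 1 <= x -> 1 <= y -> ~ D (x,y) -> (y = 1 \/ D (x, y-1)) -> U D (x,y).
Proof.
  intros h1 h2 h3 h4. unfold U, low; simpl. split.
  - intros [Hd|Hl]; auto. lia.
  - destruct h4 as [->|Hd]; [right; lia | left; exact Hd].
Qed.

Lemma U_col a b D (H : ctx a b D) x y y' : U D (x,y) -> D (x,y') -> y' < y.
Proof.
  intros Hu Hd. apply (U_unpack a b D H) in Hu. destruct Hu as [h1 [h2 [h3 _]]].
  destruct (Z_lt_ge_dec y' y); auto. exfalso. apply h3. apply (L_close a b D H x y' x y); auto; lia.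
Qed.

Lemma floor_spec n a : 0 < a -> a * (n / a) <= n < a * (n / a) + a.
Proof. intros Ha. pose proof (Z.div_mod n a ltac:(lia)). pose proof (Z.mod_pos_bound n a Ha). lia. Qed.

Lemma floor_uniq n a q : 0 < a -> a * q <= n < a * q + a -> n / a = q.
Proof. intros Ha Hq. symmetry. apply (Z.div_unique_pos n a q (n - a*q)); lia. Qed.

Definition fb (p : cell * cell) : cell := (fst (snd p), snd (fst p)).
Definition bb (a b : Z) (D : cell -> Prop) (c : cell) : cell * cell :=
  ((fst c + (b * (legf D c + 1) + a - 1) / a, snd c), (fst c, snd c + legf D c + 1)).

Lemma Nb_to_Db a b D (H : ctx a b D) p : Nb a b D p -> Db a b D (fb p).
Proof.
  destruct p as [[xi yi] [xj yj]]. unfold Nb, Nset, arrow, fb, g; simpl.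
  intros [[Hi [Hj Har]] Hy].
  pose proof (L_inG a b D H _ _ Hi) as Gi.
  pose proof Hj as Hj'. apply (U_unpack a b D H) in Hj' as [u1 [u2 [u3 [u4|u4]]]]; [lia|].
  pose proof H as [Ha [Hab _]].
  assert (Dc : D (xj, yi)) by (apply (L_close a b D H xj (yj-1)); auto; lia).
  assert (Hx : b * (yj - yi) <= a * (xi - xj)) by lia.
  assert (Hx2 : 0 < xi - xj) by nia.
  split; auto.
  destruct (arm_ex a b D H _ Dc) as [k Hk].
  exists k, (yj - 1 - yi). split; auto. split.
  - unfold is_leg, sub_b; simpl. split; [lia|split].
    + replace (yi + (yj - 1 - yi)) with (yj - 1) by lia. auto.
    + intros l' _ Hl'. pose proof (U_col a b D H _ _ _ Hj Hl'). lia.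
  - destruct Hk as [k1 [k2 k3]].
    assert (xi - xj <= k).
    { apply k3. lia. unfold sub_a; simpl. replace (xj + (xi - xj)) with xi by lia. auto. }
    split; [lia|]. apply Qdiv_le_iff; try lia. nia.
Qed.

Lemma Db_to_Nb a b D (H : ctx a b D) c : Db a b D c -> Nb a b D (bb a b D c).
Proof.
  destruct c as [x y]. intros [Dc [k [l [Hk [Hl Hm]]]]].
  unfold bb; rewrite (legf_eq D _ l Hl); simpl.
  pose proof H as [Ha [Hab _]].
  pose proof (L_inG a b D H _ _ Dc) as Gc.
  destruct Hm as [Hk0 Hm]. destruct Hk as [k1 [k2 k3]]. destruct Hl as [l1 [l2 l3]].
  apply (proj1 (Qdiv_le_iff (l+1) k a b ltac:(lia) ltac:(lia))) in Hm.
  unfold sub_a, sub_b in *; simpl in *.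
  set (q := (b * (l + 1) + a - 1) / a).
  pose proof (floor_spec (b * (l + 1) + a - 1) a ltac:(lia)) as Fq. fold q in Fq.
  assert (a*q < a*(k+1)) by lia. assert (q <= k) by nia.
  assert (1 <= q) by nia.
  unfold Nb, Nset, arrow, g; simpl. split; [split; [|split]|]; try lia.
  - apply (L_close a b D H (x+k) y); auto; lia.
  - apply U_pack; try lia.
    + intros Hd. specialize (l3 (l+1) ltac:(lia)). replace (y + (l+1)) with (y + l + 1) in l3 by lia.
      specialize (l3 Hd). lia.
    + right. replace (y + l + 1 - 1) with (y + l) by lia. auto.
Qed.

Lemma b_left a b D (H : ctx a b D) p : Nb a b D p -> bb a b D (fb p) = p.
Proof.
  destruct p as [[xi yi] [xj yj]]. intros Hp.
  pose proof (Nb_to_Db a b D H _ Hp) as [_ [k [l [_ [Hl _]]]]].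
  unfold fb in *; simpl in *.
  unfold Nb, Nset, arrow, g in Hp; simpl in Hp.
  destruct Hp as [[Hi [Hj Har]] Hy].
  pose proof H as [Ha [Hab _]].
  assert (l = yj - 1 - yi).
  { destruct Hl as [l1 [l2 l3]]. unfold sub_b in *; simpl in *.
    pose proof (U_col a b D H _ _ _ Hj l2).
    pose proof (L_inG a b D H _ _ Hi). apply (U_unpack a b D H) in Hj as [u1 [u2 [u3 [u4|u4]]]]; [lia|].
    specialize (l3 (yj - 1 - yi) ltac:(lia)). replace (yi + (yj - 1 - yi)) with (yj - 1) in l3 by lia.
    specialize (l3 u4). lia. }
  subst l. unfold bb; simpl. rewrite (legf_eq D _ _ Hl).
  replace (yi + (yj - 1 - yi) + 1) with yj by lia.
  replace ((b * (yj - 1 - yi + 1) + a - 1) / a) with (xi - xj). do 2 f_equal; lia.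
  symmetry. apply floor_uniq; lia.
Qed.

Lemma b_right a b D c : fb (bb a b D c) = c.
Proof. destruct c; reflexivity. Qed.

Definition fr (D : cell -> Prop) (p : cell * cell) : cell :=
  (fst (fst p), snd (snd p) + legf D (fst p)).
Definition br (a b : Z) (D : cell -> Prop) (c : cell) : cell * cell :=
  let l := legf D c in let xj := fst c + b * l / a in let hj := colf D xj in
  ((fst c, hj + 1 + l), (xj, hj + 1)).

Lemma Nr_to_Dr a b D (H : ctx a b D) p : Nr a b D p -> Dr a b D (fr D p).
Proof.
  destruct p as [[xi yi] [xj yj]]. unfold Nr, Nset, arrow, fr, g; simpl.
  intros [[Hi [Hj Har]] Hy].
  pose proof (L_inG a b D H _ _ Hi) as Gi.
  pose proof Hj as Hj'. apply (U_unpack a b D H) in Hj' as [u1 [u2 [u3 u4]]].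
  pose proof H as [Ha [Hab _]].
  destruct (leg_ex a b D H _ Hi) as [L HL]. rewrite (legf_eq D _ _ HL).
  destruct HL as [L1 [L2 L3]]. unfold sub_b in *; simpl in *.
  assert (Dc : D (xi, yj + L)) by (apply (L_close a b D H xi (yi + L)); auto; lia).
  split; auto.
  destruct (arm_ex a b D H _ Dc) as [k Hk].
  exists k, (yi - yj). split; auto. split.
  - unfold is_leg, sub_b; simpl. split; [lia|split].
    + replace (yj + L + (yi - yj)) with (yi + L) by lia. auto.
    + intros l' Hl0 Hl'. specialize (L3 (L + l' - (yi - yj))).
      destruct (Z_le_gt_dec l' (yi - yj)); auto.
      replace (yi + (L + l' - (yi - yj))) with (yj + L + l') in L3 by lia.
      specialize (L3 ltac:(lia) Hl'). lia.
  - destruct Hk as [k1 [k2 k3]]. unfold sub_a in *; simpl in *.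
    assert (k < xj - xi).
    { destruct (Z_lt_ge_dec k (xj - xi)); auto. exfalso. apply u3.
      apply (L_close a b D H (xi + k) (yj + L)); auto; lia. }
    unfold m_ge. apply Qdiv_le_iff; try lia. nia.
Qed.

Lemma Dr_to_Nr a b D (H : ctx a b D) c : Dr a b D c -> Nr a b D (br a b D c).
Proof.
  destruct c as [x y]. intros [Dc [k [l [Hk [Hl Hm]]]]].
  unfold br; rewrite (legf_eq D _ l Hl); simpl.
  pose proof H as [Ha [Hab _]].
  pose proof (L_inG a b D H _ _ Dc) as Gc.
  destruct Hk as [k1 [k2 k3]]. destruct Hl as [l1 [l2 l3]].
  unfold m_ge in Hm.
  apply (proj1 (Qdiv_le_iff a b l (k+1) ltac:(lia) ltac:(lia))) in Hm.
  unfold sub_a, sub_b in *; simpl in *.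
  set (q := b * l / a).
  pose proof (floor_spec (b * l) a ltac:(lia)) as Fq. fold q in Fq.
  assert (k + 1 <= q) by nia. assert (1 <= l) by nia.
  destruct (col_ex a b D H (x + q)) as [h Hh].
  rewrite (colf_eq D _ _ Hh).
  destruct Hh as [h1 [h2 h3]].
  assert (h < y).
  { destruct (Z_lt_ge_dec h y); auto. exfalso. destruct h2 as [->|h2]; [lia|].
    assert (Hxq : D (x + q, y)) by (apply (L_close a b D H (x+q) h); auto; lia).
    specialize (k3 q ltac:(lia) Hxq). lia. }
  unfold Nr, Nset, arrow, g; simpl. split; [split; [|split]|]; try lia.
  - apply (L_close a b D H x (y + l)); auto; lia.
  - apply U_pack; try lia.
    + intros Hd. apply h3 in Hd. lia.
    + destruct h2 as [->|h2]; [left; lia|]. right. replace (h + 1 - 1) with h by lia. auto.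
Qed.

Lemma r_left a b D (H : ctx a b D) p : Nr a b D p -> br a b D (fr D p) = p.
Proof.
  destruct p as [[xi yi] [xj yj]]. intros Hp.
  pose proof (Nr_to_Dr a b D H _ Hp) as [_ [k [l [_ [Hl _]]]]].
  unfold fr in *; simpl in *.
  unfold Nr, Nset, arrow, g in Hp; simpl in Hp.
  destruct Hp as [[Hi [Hj Har]] Hy].
  pose proof H as [Ha [Hab _]].
  pose proof (L_inG a b D H _ _ Hi) as Gi.
  destruct (leg_ex a b D H _ Hi) as [L HL]. rewrite (legf_eq D _ _ HL) in *.
  assert (l = yi - yj).
  { destruct Hl as [l1 [l2 l3]]. destruct HL as [L1 [L2 L3]]. unfold sub_b in *; simpl in *.
    specialize (l3 (yi - yj) ltac:(lia)). replace (yj + L + (yi - yj)) with (yi + L) in l3 by lia.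
    specialize (l3 L2). 
    specialize (L3 (L + l - (yi - yj))).
    destruct (Z_le_gt_dec l (yi - yj)); [lia|].
    replace (yi + (L + l - (yi - yj))) with (yj + L + l) in L3 by lia.
    specialize (L3 ltac:(lia) l2). lia. }
  subst l. unfold br; simpl. rewrite (legf_eq D _ _ Hl).
  assert (Hq : b * (yi - yj) / a = xj - xi) by (apply floor_uniq; lia).
  rewrite Hq. replace (xi + (xj - xi)) with xj by lia.
  apply (U_unpack a b D H) in Hj as Hj'. destruct Hj' as [u1 [u2 [u3 u4]]].
  assert (colmax D xj (yj - 1)).
  { split; [lia|split].
    - destruct u4 as [->|u4]; [left; lia|right; auto].
    - intros y' Hy'. pose proof (U_col a b D H _ _ _ Hj Hy'). lia. }
  rewrite (colf_eq D _ _ H0). f_equal; f_equal; lia.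
Qed.

Lemma r_right a b D (H : ctx a b D) c : Dr a b D c -> fr D (br a b D c) = c.
Proof.
  destruct c as [x y]. intros Hc.
  pose proof (Dr_to_Nr a b D H _ Hc) as Hn.
  destruct Hc as [Dc [k [l [Hk [Hl Hm]]]]].
  unfold fr. unfold br in *; rewrite (legf_eq D _ l Hl) in *; simpl in *.
  set (h := colf D (x + b * l / a)) in *.
  unfold Nr, Nset in Hn; simpl in Hn. destruct Hn as [[Hi [Hj _]] _].
  assert (is_leg D (x, h + 1 + l) (y - (h+1))).
  { destruct Hl as [l1 [l2 l3]]. unfold is_leg, sub_b in *; simpl in *.
    assert (h + 1 <= y).
    { destruct (Z_le_gt_dec (h+1) y); auto. exfalso.
      specialize (l3 (h+1+l-y) ltac:(lia)). replace (y + (h + 1 + l - y)) with (h + 1 + l) in l3 by lia.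
      specialize (l3 Hi). lia. }
    split; [lia|split].
    - replace (h + 1 + l + (y - (h + 1))) with (y + l) by lia. auto.
    - intros l' Hl0 Hl'. destruct (Z_le_gt_dec l' (y - (h + 1))); auto. specialize (l3 (h + 1 + l + l' - y)).
      replace (y + (h + 1 + l + l' - y)) with (h + 1 + l + l') in l3 by lia.
      specialize (l3 ltac:(lia) Hl'). lia. }
  rewrite (legf_eq D _ _ H0). f_equal. lia.
Qed.

Lemma sig_eq {A : Type} {P : A -> Prop} (x y : {a | P a}) : proj1_sig x = proj1_sig y -> x = y.
Proof. destruct x as [x Hx], y as [y Hy]; simpl; intros ->. f_equal. apply proof_irrelevance. Qed.

Theorem lemma3p2 (a b : Z) (Ha : 1 < a) (Hab : a < b) (Hcop : Z.gcd a b = 1)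
  (D : cell -> Prop) (HD : subdiagram a b D) :
  (exists f : {p | Nb a b D p} -> {c | Db a b D c}, Bijection f) /\
  (exists f : {p | Nr a b D p} -> {c | Dr a b D c}, Bijection f) /\
  (forall d : cell, D d -> (forall c, D c -> g a b d <= g a b c) ->
     ~ (Db a b D d \/ Dr a b D d)).
Proof.
  assert (H : ctx a b D) by (split; auto).
  split; [|split].
  - exists (fun p : {p | Nb a b D p} => exist (Db a b D) (fb (proj1_sig p)) (Nb_to_Db a b D H _ (proj2_sig p))).
    exists (fun c : {c | Db a b D c} => exist (Nb a b D) (bb a b D (proj1_sig c)) (Db_to_Nb a b D H _ (proj2_sig c))).
    split; intros [p Hp]; apply sig_eq; simpl.
    + apply b_left; auto.
    + apply b_right.
  - exists (fun p : {p | Nr a b D p} => exist (Dr a b D) (fr D (proj1_sig p)) (Nr_to_Dr a b D H _ (proj2_sig p))).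
    exists (fun c : {c | Dr a b D c} => exist (Nr a b D) (br a b D (proj1_sig c)) (Dr_to_Nr a b D H _ (proj2_sig c))).
    split; intros [p Hp]; apply sig_eq; simpl.
    + apply r_left; auto.
    + apply r_right; auto.
  - intros [x y] Hd Hmin [Hb|Hr].
    + destruct Hb as [_ [k [l [[k1 [k2 _]] [_ [Hk0 _]]]]]].
      specialize (Hmin _ k2). unfold g, sub_a in Hmin; simpl in Hmin. nia.
    + destruct Hr as [_ [k [l [[k1 _] [[l1 [l2 _]] Hm]]]]].
      unfold m_ge in Hm.
      apply (proj1 (Qdiv_le_iff a b l (k+1) ltac:(lia) ltac:(lia))) in Hm.
      specialize (Hmin _ l2). unfold g, sub_b in Hmin; simpl in Hmin. nia.
Qed.
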